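(* Let $\mathbb{F}$ be a field, $n\ge2$ an integer and $h$ an integer with $0\le h\le n-2$. Then there exists a unital $\mathbb{F}$-algebra $\mathcal{A}$ with $\dim\mathcal{A}=n$ and $l(\mathcal{A})=2^h$.
   Context: Algebras are finite-dimensional, unital, not necessarily associative. For a finite generating set $S$ of $\mathcal{A}$, a word in $S$ is any product (with any bracketing) of finitely many elements of $S$; its length is the number of factors, and $1$ is a word of length $0$. $L_i(S)$ is the linear span of all words in $S$ of length at most $i$. The length of $S$ is $l(S)=\min\{k\ge0: L_k(S)=\mathcal{A}\}$, and $l(\mathcal{A})=\max\{l(S): S\text{ a finite generating set of }\mathcal{A}\}$. *)

(* Defs.v *)
From HB Require Import structures.
From mathcomp Require Import all_boot all_order all_algebra.
Set Implicit Arguments. Unset Strict Implicit. Unset Printing Implicit Defensive.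
Import GRing.Theory.
Local Open Scope ring_scope.

(* A (not necessarily associative) n-dimensional F-algebra is modelled on the
   carrier 'rV[F]_n (every n-dim F-vector space is isomorphic to it) with a
   bilinear multiplication [mul] and a two-sided unit [e]. *)
Section NonAssocAlg.
Variables (F : fieldType) (n : nat).
Local Notation V := 'rV[F]_n.

Definition bilinear_mul (mul : V -> V -> V) : Prop :=
  (forall (a : F) (x y z : V), mul (a *: x + y) z = a *: mul x z + mul y z) /\
  (forall (a : F) (x y z : V), mul z (a *: x + y) = a *: mul z x + mul z y).

Definition is_unit_elt (mul : V -> V -> V) (e : V) : Prop :=
  forall x : V, mul e x = x /\ mul x e = x.

(* words_upto mul e S k = [:: W_0; W_1; ...; W_k] where W_i is the list of
   all words in S of length exactly i (all bracketings):
   W_0 = [:: e], W_1 = S, W_k = { u * v | u in W_i, v in W_(k-i), 1 <= i < k }. *)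
Fixpoint words_upto (mul : V -> V -> V) (e : V) (S : seq V) (k : nat)
  : seq (seq V) :=
  match k with
  | 0 => [:: [:: e]]
  | k'.+1 =>
      let ws := words_upto mul e S k' in
      rcons ws
        (if k' is 0 then S
         else flatten [seq [seq mul u v | u <- nth [::] ws i,
                                          v <- nth [::] ws (k'.+1 - i)]
                      | i <- iota 1 k'])
  end.

Definition Lspace (mul : V -> V -> V) (e : V) (S : seq V) (k : nat)
  : {vspace V} :=
  <<flatten (words_upto mul e S k)>>%VS.

Definition set_length (mul : V -> V -> V) (e : V) (S : seq V) (k : nat)
  : Prop :=
  Lspace mul e S k = fullv /\ (forall j : nat, (j < k)%N -> Lspace mul e S j <> fullv).

End NonAssocAlg.

(* Main.v *)
Require Import Defs.
From HB Require Import structures.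
From mathcomp Require Import all_boot all_order all_algebra.
From mathcomp Require Import ring zify.
Set Implicit Arguments. Unset Strict Implicit. Unset Printing Implicit Defensive.
Import GRing.Theory.
Local Open Scope ring_scope.

Lemma span_ind (K : fieldType) (vT : vectType K) (X : seq vT) (P : vT -> Prop) :
  P 0 -> (forall a x y, P x -> P y -> P (a *: x + y)) -> (forall x, x \in X -> P x) ->
  forall v, v \in <<X>>%VS -> P v.
Proof.
move=> P0 PC PX v Xv.
have Xv' : v \in span (in_tuple X) by [].
rewrite (coord_span Xv').
apply: big_ind => //.
  by move=> x y Px Py; rewrite -[x]scale1r; apply: PC.
move=> i _; rewrite -[_ *: _]addr0; apply: PC => //; apply: PX.
by apply: mem_nth; exact: ltn_ord.
Qed.

Section Gen.
Variables (F : fieldType) (n : nat).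
Local Notation V := 'rV[F]_n.
Variables (mul : V -> V -> V) (e : V) (S : seq V).
Hypothesis bil : bilinear_mul mul.
Hypothesis unit : is_unit_elt mul e.

Definition W i := nth [::] (words_upto mul e S i) i.

Lemma words_uptoE k : words_upto mul e S k = map W (iota 0 k.+1).
Proof.
elim: k => [//|k IH].
have sz : size (words_upto mul e S k) = k.+1 by rewrite IH size_map size_iota.
have -> : iota 0 k.+2 = rcons (iota 0 k.+1) k.+1 by rewrite -cats1 -addn1 iotaD.
rewrite map_rcons -IH /W /=.
by rewrite nth_rcons sz ltnn eqxx.
Qed.

Lemma W0 : W 0 = [:: e].
Proof. by []. Qed.

Lemma W1 : W 1 = S.
Proof. by []. Qed.

Lemma WS k : W k.+2 = flatten [seq [seq mul u v | u <- W i, v <- W (k.+2 - i)] | i <- iota 1 k.+1].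
Proof.
have E : W k.+2 = nth [::] (rcons (words_upto mul e S k.+1)
        (flatten [seq [seq mul u v | u <- nth [::] (words_upto mul e S k.+1) i,
                                          v <- nth [::] (words_upto mul e S k.+1) (k.+2 - i)]
                      | i <- iota 1 k.+1])) k.+2 by [].
rewrite E nth_rcons words_uptoE size_map size_iota ltnn eqxx.
congr flatten; apply/eq_in_map => i; rewrite mem_iota => /andP[i1 i2].
rewrite !(nth_map 0) ?size_iota ?nth_iota //; try lia.
Qed.

Lemma Wmul i j u v : (0 < i)%N -> (0 < j)%N -> u \in W i -> v \in W j -> mul u v \in W (i + j).
Proof.
move=> i0 j0 ui vj.
have [k ek] : exists k, (i + j = k.+2)%N by exists (i + j - 2)%N; lia.
rewrite ek WS; apply/flatten_mapP; exists i; first by rewrite mem_iota; lia.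
have -> : (k.+2 - i = j)%N by lia.
exact: allpairs_f.
Qed.

Lemma W_ind (Q : nat -> V -> Prop) :
  Q 0%N e -> (forall s, s \in S -> Q 1%N s) ->
  (forall i j u v, (0 < i)%N -> (0 < j)%N -> Q i u -> Q j v -> Q (i + j)%N (mul u v)) ->
  forall k w, w \in W k -> Q k w.
Proof.
move=> Q0 Q1 QM k; elim/ltn_ind: k => -[|[|k]] IH w.
- by rewrite W0 inE => /eqP->.
- by rewrite W1; apply: Q1.
- rewrite WS => /flatten_mapP[i]; rewrite mem_iota => /andP[i1 i2] /allpairsP[[u v] [/= ui vj ->]].
  have -> : (k.+2 = i + (k.+2 - i))%N by lia.
  apply: QM; try lia; apply: IH => //; lia.
Qed.

Lemma LspaceE k : Lspace mul e S k = <<flatten (map W (iota 0 k.+1))>>%VS.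
Proof. by rewrite /Lspace words_uptoE. Qed.

Lemma W_L i k w : (i <= k)%N -> w \in W i -> w \in Lspace mul e S k.
Proof.
move=> ik wi; rewrite LspaceE; apply: memv_span; apply/flatten_mapP; exists i => //.
by rewrite mem_iota; lia.
Qed.

Lemma L_sub k (U : {vspace V}) :
  (forall i w, (i <= k)%N -> w \in W i -> w \in U) -> (Lspace mul e S k <= U)%VS.
Proof.
move=> H; rewrite LspaceE; apply/span_subvP => w /flatten_mapP[i]; rewrite mem_iota => ik wi.
by apply: (H i) => //; lia.
Qed.

Lemma L_mono j k : (j <= k)%N -> (Lspace mul e S j <= Lspace mul e S k)%VS.
Proof. by move=> jk; apply: L_sub => i w ij; apply: W_L; lia. Qed.

Lemma mulzl y : mul 0 y = 0.
Proof.
have := (bil.1 1 0 0 y); rewrite !scale1r addr0 => h.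
by apply: (@addIr _ (mul 0 y)); rewrite add0r -h.
Qed.

Lemma mulzr y : mul y 0 = 0.
Proof.
have := (bil.2 1 0 0 y); rewrite !scale1r addr0 => h.
by apply: (@addIr _ (mul y 0)); rewrite add0r -h.
Qed.

Lemma L_mul i j x y : x \in Lspace mul e S i -> y \in Lspace mul e S j ->
  mul x y \in Lspace mul e S (i + j).
Proof.
rewrite {1}LspaceE => xi yj; move: x xi; apply: span_ind.
- by rewrite mulzl rpred0.
- by move=> a x1 x2 h1 h2; rewrite bil.1; apply: memvD => //; apply: memvZ.
move=> u /flatten_mapP[a]; rewrite mem_iota => ai ua.
rewrite {1}LspaceE in yj; move: y yj; apply: span_ind.
- by rewrite mulzr rpred0.
- by move=> c x1 x2 h1 h2; rewrite bil.2; apply: memvD => //; apply: memvZ.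
move=> v /flatten_mapP[b]; rewrite mem_iota => bj vb.
case: a ai ua => [|a] ai ua.
  move: ua; rewrite W0 inE => /eqP->; rewrite (unit v).1; apply: (W_L (i := b)) => //; lia.
case: b bj vb => [|b] bj vb.
  move: vb; rewrite W0 inE => /eqP->; rewrite (unit u).2; apply: (W_L (i := a.+1)) => //; lia.
apply: (W_L (i := (a.+1 + b.+1)%N)); first lia.
exact: Wmul.
Qed.

End Gen.
Section Conc.
Variables (F : fieldType) (n' h : nat).
Hypothesis hn : (h <= n')%N.
Local Notation N := n'.+2.
Local Notation V := 'rV[F]_N.

Definition sq (x y : V) (j : 'I_N) : F :=
  if (1 < j <= h.+1)%N then x 0 (inord j.-1) * y 0 (inord j.-1) else 0.
Definition mulA (x y : V) : V := \row_j
  (if j == ord0 then x 0 ord0 * y 0 ord0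
   else x 0 ord0 * y 0 j + x 0 j * y 0 ord0 + sq x y j).
Definition eA : V := delta_mx 0 ord0.
Definition dl (j : nat) : V := delta_mx 0 (inord j).

Lemma mulA_bil : bilinear_mul mulA.
Proof.
by split=> a x y z; apply/rowP => j; rewrite /mulA /sq !mxE;
  case: (j == ord0); case: (1 < j <= h.+1)%N; ring.
Qed.

Lemma eq_inord (k : 'I_N) a : (a < N)%N -> (k == inord a) = (nat_of_ord k == a).
Proof. by move=> aN; rewrite -val_eqE /= inordK. Qed.

Lemma eq_ord0 (k : 'I_N) : (k == ord0) = (nat_of_ord k == 0%N).
Proof. by rewrite -val_eqE. Qed.

Lemma eAE (k : 'I_N) : eA 0 k = (nat_of_ord k == 0%N)%:R.
Proof. by rewrite /eA mxE eqxx eq_ord0. Qed.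

Lemma dlE a (k : 'I_N) : (a < N)%N -> dl a 0 k = (nat_of_ord k == a)%:R.
Proof. by move=> aN; rewrite /dl mxE eqxx eq_inord. Qed.

Lemma mulAE (x y : V) (k : 'I_N) : mulA x y 0 k =
  if nat_of_ord k == 0%N then x 0 ord0 * y 0 ord0
  else x 0 ord0 * y 0 k + x 0 k * y 0 ord0 + sq x y k.
Proof. by rewrite /mulA mxE eq_ord0. Qed.

Lemma mulA_unit : is_unit_elt mulA eA.
Proof.
move=> x; split; apply/rowP => j; rewrite mulAE /sq !eAE /=;
  case: j => j jN /=;
  (case: j jN => [|j] jN /=; first by rewrite ?mul1r ?mulr1; congr (x 0 _); apply: val_inj);
  case: ifP => h1; rewrite ?eAE ?inordK /=; try lia;
  try (have -> : (j == 0%N) = false by lia);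
  by rewrite /= ?mul1r ?mulr1 ?mul0r ?mulr0 ?addr0 ?add0r.
Qed.

Definition supp lo hi (v : V) := forall j : 'I_N, ~~ (lo <= j <= hi)%N -> v 0 j = 0.
Definition Aspan : {vspace V} := <<[seq dl j | j <- iota 2 h]>>%VS.

Lemma supp_Aspan v : supp 2 h.+1 v -> v \in Aspan.
Proof.
move=> sv; rewrite (row_sum_delta v); apply: rpred_sum => j _.
case: (boolP (2 <= j <= h.+1)%N) => hj.
- apply: memvZ; apply: memv_span; apply/mapP; exists (nat_of_ord j); first by rewrite mem_iota; lia.
  by rewrite /dl inord_val.
- by rewrite sv // scale0r rpred0.
Qed.

Lemma Aspan_supp v : v \in Aspan -> supp 2 h.+1 v.
Proof.
move: v; apply: span_ind.
- by move=> j _; rewrite mxE.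
- by move=> a x y hx hy j hj; rewrite !mxE hx // hy // mulr0 addr0.
- move=> x /mapP[a]; rewrite mem_iota => ha -> j hj; rewrite dlE; last lia.
  by have -> : (nat_of_ord j == a) = false by lia.
Qed.

Lemma mulA_dec x y : mulA x y =
  x 0 ord0 *: y + y 0 ord0 *: x - (x 0 ord0 * y 0 ord0) *: eA + \row_j sq x y j.
Proof.
apply/rowP => j; rewrite mulAE !mxE ?eAE; case: eqP => [j0|jn0] /=; rewrite ?eq_ord0.
- have -> : j = ord0 by apply: val_inj.
  by rewrite /sq /= mulr1; ring.
- by rewrite (introF eqP jn0) mulr0 subr0; ring.
Qed.

Lemma sq_supp x y : supp 2 h.+1 (\row_j sq x y j).
Proof. by move=> j hj; rewrite mxE /sq ifN //; lia. Qed.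

Definition T i (t : V) := [/\ t 0 ord0 = 0, t 0 (inord i.+1) = 1 &
  forall j : 'I_N, ((0 < j <= i) || (h.+1 < j))%N -> t 0 j = 0].

Lemma T_step i t : (i < h)%N -> T i t -> T i.+1 (mulA t t).
Proof.
move=> ih [t0 t1 tz]; split.
- by rewrite mulAE /= t0 mulr0.
- rewrite mulAE inordK /=; last lia.
  rewrite t0 /sq inordK /=; last lia.
  by rewrite ifT ?t1 ?mul0r ?mulr0 ?add0r ?mulr1 //; lia.
- move=> j hj; have := ltn_ord j => jN.
  rewrite mulAE; have -> : (nat_of_ord j == 0%N) = false by lia.
  rewrite t0 /sq mul0r mulr0 add0r; case: ifP => h2; last by rewrite addr0.
  rewrite tz ?mul0r ?addr0 //; rewrite inordK; lia.
Qed.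

Lemma key S : (exists t, t \in Lspace mulA eA S 1 /\ T 0 t) ->
  forall v, supp 2 h.+1 v -> v \in Lspace mulA eA S (2 ^ h).
Proof.
move=> [t0 [t0L t0T]].
have tex : forall i, (i <= h)%N -> exists t, t \in Lspace mulA eA S (2 ^ i) /\ T i t.
  elim=> [|i IH] ih; first by exists t0.
  have [t [tL tT]] := IH (ltnW ih).
  exists (mulA t t); split; last exact: T_step.
  by rewrite expnS mul2n -addnn; exact: (L_mul mulA_bil mulA_unit tL tL).
have claim : forall m, (m <= h)%N -> forall v, supp (h.+2 - m) h.+1 v ->
    v \in Lspace mulA eA S (2 ^ h).
  elim=> [|m IH] mh v sv.
  - have -> : v = 0 by apply/rowP => j; rewrite mxE; apply: sv; lia.
    exact: rpred0.
  - have [t [tL [tt0 tt1 ttz]]] := tex (h - m)%N (leq_subr _ _).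
    set c := v 0 (inord (h - m).+1).
    have -> : v = (v - c *: t) + c *: t by rewrite subrK.
    apply: memvD; last first.
      apply: memvZ; apply: (subvP (L_mono _ _ _ _) _ tL).
      by apply: leq_pexp2l => //; lia.
    apply: IH; first lia.
    move=> j hj; have := ltn_ord j => jN; rewrite !mxE.
    case: (boolP (nat_of_ord j == (h - m).+1)) => hji.
    + have -> : j = inord (h - m).+1 by apply/eqP; rewrite eq_inord //; lia.
      by rewrite tt1 mulr1 /c subrr.
    + move/eqP: hji => hji; rewrite sv; last lia.
      case: (boolP (nat_of_ord j == 0%N)) => j0.
        have -> : j = ord0 by apply/eqP; rewrite eq_ord0.
        by rewrite tt0 mulr0 subrr.
      by rewrite ttz ?mulr0 ?subrr //; lia.
have := claim h (leqnn h); have -> : (h.+2 - h = 2)%N by lia.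
by [].
Qed.

Lemma upper S k : set_length mulA eA S k -> (k <= 2 ^ h)%N.
Proof.
move=> [Lk Lj].
set P := (Lspace mulA eA S 1 + Aspan)%VS.
have eP : eA \in P.
  apply: (subvP (addvSl _ _)); apply: (W_L (i:=0)) => //; by rewrite W0 mem_head.
have P_words : forall i w, w \in W mulA eA S i -> w \in P.
  move=> i w; apply: (W_ind (Q := fun _ w => w \in P)) => //.
  - move=> s sS; apply: (subvP (addvSl _ _)); apply: (W_L (i:=1)) => //; by rewrite W1.
  - move=> i' j u v _ _ hu hv; rewrite mulA_dec.
    apply: memvD; last by apply: (subvP (addvSr _ _)); apply: supp_Aspan; apply: sq_supp.
    apply: memvB; last exact: memvZ.
    by apply: memvD; apply: memvZ.
have PL : (fullv <= P)%VS by rewrite -Lk; apply: L_sub => i w _; apply: P_words.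
have keyS : forall v, supp 2 h.+1 v -> v \in Lspace mulA eA S (2 ^ h).
  apply: key.
  case/memv_addP: (subvP PL (dl 1) (memvf _)) => u uL [w wA e1].
  exists u; split => //.
  have sw := Aspan_supp wA.
  have -> : u = dl 1 - w by rewrite e1 addrK.
  split.
  - by rewrite !mxE eqxx eq_inord //= sw //= subr0.
  - rewrite !mxE eqxx eq_inord // inordK // eqxx sw ?subr0 // inordK //; lia.
  - move=> j hj; rewrite !mxE eqxx eq_inord // sw; last lia.
    rewrite (_ : (nat_of_ord j == 1%N) = false) ?subr0 //; lia.
have full : Lspace mulA eA S (2 ^ h) = fullv.
  apply/eqP; rewrite eqEsubv subvf /=; apply/subvP => v _.
  case/memv_addP: (subvP PL v (memvf v)) => u uL [w wA ->].
  apply: memvD; last by apply: keyS; exact: Aspan_supp.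
  by apply: (subvP (L_mono _ _ _ _) _ uL); exact: expn_gt0.
rewrite leqNgt; apply/negP => kh; exact: Lj _ kh full.
Qed.

Definition S0 : seq V := dl 1 :: [seq dl j | j <- iota h.+2 (n' - h)].

Lemma lower : set_length mulA eA S0 (2 ^ h).
Proof.
have d1 : dl 1 \in Lspace mulA eA S0 1.
  by apply: (W_L (i:=1)) => //; rewrite W1 mem_head.
have keyS : forall v, supp 2 h.+1 v -> v \in Lspace mulA eA S0 (2 ^ h).
  apply: key; exists (dl 1); split => //; split.
  - by rewrite dlE.
  - by rewrite dlE // inordK // eqxx.
  - move=> j hj; rewrite dlE //.
    by have -> : (nat_of_ord j == 1%N) = false by lia.
split.
- apply/eqP; rewrite eqEsubv subvf /=; apply/subvP => v _.
  rewrite (row_sum_delta v); apply: rpred_sum => j _; apply: memvZ.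
  have jN := ltn_ord j.
  case: (boolP (nat_of_ord j == 0%N)) => j0.
    have -> : delta_mx 0 j = eA by rewrite /eA; congr delta_mx; apply/eqP; rewrite eq_ord0.
    by apply: (W_L (i:=0)) => //; rewrite W0 mem_head.
  case: (boolP ((nat_of_ord j == 1%N) || (h.+1 < j)%N)) => j1.
    have -> : delta_mx 0 j = dl j by rewrite /dl inord_val.
    apply: (W_L (i:=1)); first exact: expn_gt0.
    rewrite W1 inE; case/orP: j1 => [/eqP j1|j1].
      by rewrite j1 eqxx.
    apply/orP; right; apply/mapP; exists (nat_of_ord j) => //.
    by rewrite mem_iota; lia.
  apply: keyS => k hk; rewrite mxE eqxx /=.
  by have -> : (k == j) = false by apply/negP => /eqP kj; rewrite kj in hk; lia.
- move=> j jh Lfull.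
  have inv : forall v, v \in Lspace mulA eA S0 j -> v 0 (inord h.+1) = 0.
    rewrite LspaceE; apply: span_ind.
    + by rewrite mxE.
    + by move=> a x y hx hy; rewrite !mxE hx hy mulr0 addr0.
    move=> w /flatten_mapP[i]; rewrite mem_iota => ij wi.
    suff : (forall p, (p <= h)%N -> (i < 2 ^ p)%N -> w 0 (inord p.+1) = 0) /\
           ((0 < i)%N -> w 0 ord0 = 0).
      by case=> H _; apply: H => //; lia.
    move: wi; apply: (W_ind (Q := fun i w =>
        (forall p, (p <= h)%N -> (i < 2 ^ p)%N -> w 0 (inord p.+1) = 0) /\
        ((0 < i)%N -> w 0 ord0 = 0))).
    + split => // p hp _; rewrite eAE inordK //; lia.
    + move=> s; rewrite inE => /orP[/eqP->|/mapP[a]].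
        split => //; last by rewrite dlE.
        move=> [|p] hp //= _; rewrite dlE // inordK //; lia.
      rewrite mem_iota => ha ->; split.
        move=> p hp _; rewrite dlE; last lia.
        rewrite inordK; last lia.
        by rewrite (_ : (p.+1 == a) = false) //; lia.
      by move=> _; rewrite dlE /=; [case: eqP => //; lia | lia].
    + move=> i1 j1 u v i0 j0 [Qu1 Qu2] [Qv1 Qv2]; split; last first.
        by move=> _; rewrite mulAE /= Qu2 // mul0r.
      move=> p hp hlt; rewrite mulAE inordK /=; last lia.
      rewrite Qu2 // Qv2 // mul0r mulr0 add0r /sq inordK /=; last lia.
      case: p hp hlt => [|p] hp hlt; first by rewrite addr0.
      rewrite ifT; last lia.
      move: hlt; rewrite expnS mul2n -addnn => hlt.
      have [hi|hj] : (i1 < 2 ^ p)%N \/ (j1 < 2 ^ p)%N by lia.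
        by rewrite Qu1 ?mul0r ?addr0 //; lia.
      by rewrite Qv1 ?mulr0 ?addr0 //; lia.
  have := inv (dl h.+1); rewrite Lfull memvf dlE // inordK // eqxx => /(_ isT) /eqP.
  by rewrite oner_eq0.
Qed.

End Conc.

Theorem proposition3p8 (F : fieldType) (n h : nat) :
  (2 <= n)%N -> (h <= n - 2)%N ->
  exists (mul : 'rV[F]_n -> 'rV[F]_n -> 'rV[F]_n) (e : 'rV[F]_n),
    [/\ bilinear_mul mul, is_unit_elt mul e,
        (exists S : seq 'rV[F]_n, set_length mul e S (2 ^ h)%N) &
        (forall (S : seq 'rV[F]_n) (k : nat), set_length mul e S k -> (k <= 2 ^ h)%N)].
Proof.
case: n => [|[|n']] // _ hn.
have hn' : (h <= n')%N by move: hn; rewrite subSS; lia.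
exists (@mulA F n' h), (@eA F n'); split.
- exact: mulA_bil.
- exact: mulA_unit.
- by exists (S0 F n' h); exact: lower.
- by move=> S k; apply: upper.
Qed.
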